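(* Let $M,F$ be positive integers and $\epsilon>0$, and set $B=\frac{e^\epsilon+1}{e^\epsilon-1}\cdot MF$. Consider the randomized algorithm $\mathcal{A}$ which, on input a real matrix $G\in\mathbb{R}^{M\times F}$, does the following: (1) initialize $\tilde G=0\in\mathbb{R}^{M\times F}$; (2) sample a row index $i\in\{1,\dots,M\}$ uniformly at random; (3) project the row $G^{i}$ onto $[-1,1]$, i.e. replace each entry $G^{i,f}$ by $\max(-1,\min(1,G^{i,f}))$; (4) sample a column index $f\in\{1,\dots,F\}$ uniformly at random, independently of $i$; (5) sample a Bernoulli random variable $\beta$ with $$\Pr[\beta=1]=\frac{G^{i,f}(e^\epsilon-1)+e^\epsilon+1}{2e^\epsilon+2},$$ where $G^{i,f}$ denotes the projected value from step (3); (6) if $\beta=1$ set $\tilde G^{i,f}=B$, otherwise set $\tilde G^{i,f}=-B$; (7) output $\tilde G$. Then $\mathcal{A}$ is an $\epsilon$-local randomizer: for all inputs $G,G'\in\mathbb{R}^{M\times F}$ and every possible output $Y$, $$\Pr[\mathcal{A}(G)=Y]\le e^\epsilon\cdot\Pr[\mathcal{A}(G')=Y].$$ Equivalently, $\mathcal{A}$ satisfies $\epsilon$-local differential privacy.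
   Context: A randomized algorithm $\Phi:\mathcal{U}\to\mathcal{Y}$ is an $\epsilon$-local randomizer ($\epsilon>0$) if for all inputs $x,x'\in\mathcal{U}$ and all outputs $Y$ of $\Phi$, $\Pr[\Phi(x)=Y]\le e^\epsilon\Pr[\Phi(x')=Y]$. In the paper, the input $G$ is a user's item-embedding gradient matrix with $M$ items and $F$ latent factors, and the output is a privatized report that is nonzero in exactly one entry. *)

(* Defs.v *)
From mathcomp Require Import all_boot all_order all_algebra.
From mathcomp Require Import all_classical all_reals all_analysis.
Set Implicit Arguments. Unset Strict Implicit. Unset Printing Implicit Defensive.
Import Order.TTheory GRing.Theory Num.Theory.
Local Open Scope ring_scope.

Section LDP.
Variable R : realType.

Definition Bconst (M F : nat) (eps : R) : R :=
  (expR eps + 1) / (expR eps - 1) * (M%:R * F%:R).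

Definition clip (x : R) : R := Num.max (-1) (Num.min 1 x).

Definition pbeta (eps g : R) : R :=
  (g * (expR eps - 1) + expR eps + 1) / (2 * expR eps + 2).

Definition report (M F : nat) (i : 'I_M) (f : 'I_F) (v : R) : 'M[R]_(M, F) :=
  \matrix_(a < M, b < F) (if (a == i) && (b == f) then v else 0).

(* Output distribution of the algorithm A: probability that A(G) = Y.
   i, f uniform and independent; beta Bernoulli(pbeta eps (clip (G i f))). *)
Definition prob_out (M F : nat) (eps : R) (G Y : 'M[R]_(M, F)) : R :=
  \sum_(i < M) \sum_(f < F)
    (M%:R^-1 * F%:R^-1) *
    (pbeta eps (clip (G i f)) * (Y == report i f (Bconst M F eps))%:R
     + (1 - pbeta eps (clip (G i f))) * (Y == report i f (- Bconst M F eps))%:R).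

(* epsilon-local randomizer, specialised to a discrete-output algorithm given by
   its output probability function *)
Definition local_randomizer (X Y : Type) (eps : R) (P : X -> Y -> R) : Prop :=
  forall (x x' : X) (y : Y), P x y <= expR eps * P x' y.

End LDP.

(* Main.v *)
Require Import Defs.
From mathcomp Require Import all_boot all_order all_algebra.
From mathcomp Require Import all_classical all_reals all_analysis.
From mathcomp Require Import ring lra.
Import Order.TTheory GRing.Theory Num.Theory.
Local Open Scope ring_scope.

Lemma clip_bnd (R : realType) (x : R) : -1 <= clip x <= 1.
Proof.
rewrite /clip; apply/andP; split; first by rewrite le_max lexx.
rewrite ge_max; apply/andP; split; first by lra.
by rewrite ge_min lexx.
Qed.

Lemma pb_bnd (R : realType) (eps g : R) : 0 < eps -> -1 <= g <= 1 ->
  2 / (2 * expR eps + 2) <= pbeta eps g /\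
  pbeta eps g <= expR eps * (2 / (2 * expR eps + 2)).
Proof.
move=> he /andP[g1 g2].
have E1 : 1 < expR eps by rewrite -expR0 ltr_expR.
set E := expR eps in E1 *.
have dp : 0 < 2 * E + 2 by lra.
rewrite /pbeta -/E; split.
- rewrite ler_pM2r ?invr_gt0 //; nra.
- rewrite mulrA ler_pM2r ?invr_gt0 //; nra.
Qed.

Lemma helper (R : realType) (a b a' b' E x y : R) : 0 <= x -> 0 <= y ->
  a <= E * a' -> b <= E * b' -> a * x + b * y <= E * (a' * x + b' * y).
Proof.
move=> hx hy ha hb; rewrite mulrDr !mulrA; apply: lerD; exact: ler_wpM2r.
Qed.

Theorem theorem1 (R : realType) (M F : nat) (eps : R) :
  (0 < M)%N -> (0 < F)%N -> 0 < eps ->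
  local_randomizer eps (fun G Y : 'M[R]_(M, F) => @prob_out R M F eps G Y).
Proof.
move=> hM hF he G G' Y; rewrite /prob_out.
rewrite mulr_sumr; apply: ler_sum => i _.
rewrite mulr_sumr; apply: ler_sum => f _.
have E0 : 0 < expR eps by rewrite expR_gt0.
set c := _ * _^-1.
have c0 : 0 <= c by rewrite mulr_ge0 // invr_ge0 ler0n.
set i1 := (_ == _)%:R; set i2 := (_ == _)%:R.
have i10 : 0 <= i1 by rewrite ler0n.
have i20 : 0 <= i2 by rewrite ler0n.
have [a1 b1] := @pb_bnd R eps (clip (G i f)) he (clip_bnd _ _).
have [a2 b2] := @pb_bnd R eps (clip (G' i f)) he (clip_bnd _ _).
have nb : forall x : R, -1 <= - clip x <= 1.
  by move=> x; move: (clip_bnd R x) => /andP[? ?]; apply/andP; split; lra.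
have [a3 b3] := @pb_bnd R eps (- clip (G i f)) he (nb _).
have [a4 b4] := @pb_bnd R eps (- clip (G' i f)) he (nb _).
have q : forall g, 1 - pbeta eps g = pbeta eps (- g).
  move=> g; rewrite /pbeta; field.
  have : 0 < expR eps by rewrite expR_gt0.
  move=> h; apply/eqP => h2; lra.
rewrite !q.
rewrite mulrCA -subr_ge0 -mulrBr; apply: mulr_ge0 => //; rewrite subr_ge0.
exact: (@helper R _ _ _ _ _ _ _ i10 i20 (le_trans b1 (ler_wpM2l (ltW E0) a2))
  (le_trans b3 (ler_wpM2l (ltW E0) a4))).
Qed.
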